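(* Assume the orthonormal basis satisfies $|b_i(l)|^2=1/n$ for all $i,l\in G$, and let $\gamma=|h\rangle\langle h|$ with $|h(l)|^2=1/n$ for all $l\in G$. Then for every state $\rho$ on $L_2(G)$ and all $i,j\in G$, $$\Lambda_{i,j}(\rho\otimes\gamma)=V_{i,j}\rho V_{i,j}^*,\qquad V_{i,j}=n\,\mathcal O_hU_jB_i^*,$$ and $V_{i,j}$ is unitary.
   Context: Fix an integer $n\ge 1$ and $G=\{1,\dots,n\}$. $L_2(G)$ is the space of functions $f:G\to\mathbb C$ with inner product $\langle f,g\rangle=\sum_{k\in G}\overline{f(k)}g(k)$; $L_2(G^2)$, $L_2(G^3)$ are the analogous spaces on $G^2,G^3$, identified with tensor products via $(f\otimes g)(k,l)=f(k)g(l)$; the three factors of $L_2(G^3)=\mathcal H_1\otimes\mathcal H_2\otimes\mathcal H_3$ are numbered 1,2,3. For a vector $f$, $|f\rangle\langle f|$ is the operator $\phi\mapsto\langle f,\phi\rangle f$. $I$ is the identity. A state is a positive operator of trace 1. For $k,l\in G$, $k\oplus l$ is the unique element of $G$ congruent to $k+l$ modulo $n$. $\mathcal O_g$ is the multiplication operator $(\mathcal O_gf)(k)=g(k)f(k)$. $J:L_2(G)\to L_2(G^2)$ is $(Jf)(k,l)=f(k)\delta_{k,l}$. $U_k$ is the unitary $(U_kf)(m)=f(k\oplus m)$. $(b_k)_{k\in G}$ is a fixed orthonormal basis of $L_2(G)$ and $B_k=\mathcal O_{b_k}$. $\xi_{k,l}(m,r)=b_k(m)\delta_{m,r\oplus l}$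 and $F_{i,j}=|\xi_{i,j}\rangle\langle\xi_{i,j}|$. For a state $\gamma$, $\mathbf e(\gamma):=J\gamma J^*$. For states $\rho,\gamma$ with positive denominator, $$\Lambda_{i,j}(\rho\otimes\gamma):=\frac{\operatorname{Tr}_{1,2}(F_{i,j}\otimes I)(\rho\otimes\mathbf e(\gamma))(F_{i,j}\otimes I)}{\operatorname{Tr}_{1,2,3}(F_{i,j}\otimes I)(\rho\otimes\mathbf e(\gamma))(F_{i,j}\otimes I)},$$ with $\operatorname{Tr}_{1,2}$ the partial trace over $\mathcal H_1\otimes\mathcal H_2$ and $\operatorname{Tr}_{1,2,3}$ the full trace. *)

(* Defs.v *)
From HB Require Import structures.
From mathcomp Require Import all_boot all_order all_algebra.
Set Implicit Arguments. Unset Strict Implicit. Unset Printing Implicit Defensive.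
Import Order.TTheory GRing.Theory Num.Theory.
Local Open Scope ring_scope.

(* A vector is a function T -> C; a linear map L_2(T) -> L_2(U) is given by
   its kernel (matrix) U -> T -> C, acting as (A f)(u) = \sum_t A u t * f t. *)
Section Ops.
Variable C : numClosedFieldType.

Definition vec (T : finType) := T -> C.
Definition lin (T U : finType) := U -> T -> C.
Definition op (T : finType) := lin T T.

Definition inner (T : finType) (f g : vec T) : C := \sum_k (f k)^* * g k.
Definition opapp (T U : finType) (A : lin T U) (f : vec T) : vec U :=
  fun u => \sum_t A u t * f t.
Definition ocomp (T U W : finType) (A : lin U W) (B : lin T U) : lin T W :=
  fun w t => \sum_u A w u * B u t.
Definition adjoint (T U : finType) (A : lin T U) : lin U T :=
  fun t u => (A u t)^*.
Definition oscale (T U : finType) (a : C) (A : lin T U) : lin T U :=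
  fun u t => a * A u t.
Definition idop (T : finType) : op T := fun x y => (x == y)%:R.
Definition ketbra (T : finType) (f : vec T) : op T := fun x y => f x * (f y)^*.
Definition tensor (T1 T2 : finType) (A : op T1) (B : op T2) : op (prod T1 T2) :=
  fun x y => A x.1 y.1 * B x.2 y.2.
Definition otrace (T : finType) (A : op T) : C := \sum_x A x x.
Definition reassoc (T1 T2 T3 : finType) (A : op (prod T1 (prod T2 T3))) : op (prod (prod T1 T2) T3) :=
  fun x y => A (x.1.1, (x.1.2, x.2)) (y.1.1, (y.1.2, y.2)).
Definition ptr12 (T1 T2 T3 : finType) (A : op (prod (prod T1 T2) T3)) : op T3 :=
  fun k l => \sum_(u : (prod T1 T2)) A (u, k) (u, l).

Definition positive_op (T : finType) (A : op T) : Prop :=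
  forall f : vec T, 0 <= inner f (opapp A f).
Definition is_state (T : finType) (A : op T) : Prop :=
  positive_op A /\ otrace A = 1.
Definition unitary (T : finType) (V : op T) : Prop :=
  ocomp (adjoint V) V = @idop T /\ ocomp V (adjoint V) = @idop T.
Definition orthonormal_basis (T : finType) (b : T -> vec T) : Prop :=
  (forall i j, inner (b i) (b j) = (i == j)%:R) /\
  (forall f : vec T, exists c : T -> C, forall x, f x = \sum_i c i * b i x).

(* G = {1,...,n} is represented by 'I_n, the ordinal k standing for k+1. *)
Lemma ord_pos (n : nat) (k : 'I_n) : (0 < n)%N.
Proof. exact: leq_ltn_trans (leq0n k) (ltn_ord k). Qed.

(* k (+) l : the element of {1..n} congruent to k+l mod n. With labels
   k = k'+1, l = l'+1 it has label ((k'+l'+1) %% n) + 1. *)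
Definition oplus (n : nat) (k l : 'I_n) : 'I_n :=
  Ordinal (ltn_pmod (k + l + 1)%N (ord_pos k)).

Variable n : nat.
Notation G := 'I_n.

Definition mulop (g : vec G) : op G := fun k l => (k == l)%:R * g k.
Definition Jmap : lin G (prod G G) := fun kl m => ((kl.1 == kl.2) && (kl.1 == m))%:R.
(* (U_k f)(m) = f(k (+) m) *)
Definition Ushift (k : G) : op G := fun m r => (r == oplus k m)%:R.
Definition Bop (b : G -> vec G) (k : G) : op G := mulop (b k).
Definition xi (b : G -> vec G) (k l : G) : vec (prod G G) :=
  fun mr => b k mr.1 * (mr.1 == oplus mr.2 l)%:R.
Definition Fop (b : G -> vec G) (i j : G) : op (prod G G) := ketbra (xi b i j).
Definition emb (g : op G) : op (prod G G) := ocomp (ocomp Jmap g) (adjoint Jmap).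

Definition Lambda_num (b : G -> vec G) (i j : G) (rho gam : op G) : op (prod (prod G G) G) :=
  let FI := tensor (Fop b i j) (@idop G) in
  ocomp (ocomp FI (reassoc (tensor rho (emb gam)))) FI.
Definition Lambda_den (b : G -> vec G) (i j : G) (rho gam : op G) : C :=
  otrace (Lambda_num b i j rho gam).
Definition Lambda (b : G -> vec G) (i j : G) (rho gam : op G) : op G :=
  oscale (Lambda_den b i j rho gam)^-1 (ptr12 (Lambda_num b i j rho gam)).

End Ops.

Arguments idop {C T}.
Arguments Jmap {C n}.
Arguments Ushift {C n}.

(* Main.v *)
Require Import Defs.
From HB Require Import structures.
From mathcomp Require Import all_boot all_order all_algebra ring.
From Stdlib Require Import FunctionalExtensionality.
Import Order.TTheory GRing.Theory Num.Theory.
Local Open Scope ring_scope.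

Lemma sum_only {C : numClosedFieldType} {T : finType} (a : T) (F : T -> C) :
  (forall k, k != a -> F k = 0) -> \sum_k F k = F a.
Proof.
move=> H; rewrite (bigD1 a) //= big1 ?addr0 // => k /andP[_ Hk]; exact: H.
Qed.

Lemma sum_pair {C : numClosedFieldType} {T1 T2 : finType} (F : T1 * T2 -> C) :
  \sum_p F p = \sum_a \sum_b F (a, b).
Proof. by rewrite pair_bigA; apply: eq_bigr => -[a b]. Qed.

Lemma oplusC n (k l : 'I_n) : oplus k l = oplus l k.
Proof. by apply: val_inj => /=; rewrite (addnC k). Qed.

Lemma oplus_inj n (j : 'I_n) : injective (oplus j).
Proof.
move=> k k' /(congr1 val) /= /eqP.
rewrite -!addnA !(addnC _ 1%N) !addnA eqn_modDl !modn_small ?ltn_ord // => /eqP H.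
exact: val_inj.
Qed.

Lemma conjb {C : numClosedFieldType} (c : bool) : ((c%:R : C)^* = c%:R).
Proof. by case: c; rewrite ?conjC1 ?conjC0. Qed.

Lemma V_entry (C : numClosedFieldType) n (b : 'I_n -> 'I_n -> C) h i j k t :
  oscale n%:R (ocomp (mulop h) (ocomp (Ushift j) (adjoint (Bop b i)))) k t
  = n%:R * h k * (t == oplus j k)%:R * (b i t)^*.
Proof.
rewrite /oscale /ocomp (sum_only k) => [|u Hu]; last first.
  by rewrite /mulop eq_sym (negbTE Hu) mul0r mul0r.
rewrite /mulop eqxx mul1r (sum_only (oplus j k)) => [|w Hw]; last first.
  by rewrite /Ushift (negbTE Hw) mul0r.
rewrite /Ushift /adjoint /Bop /mulop eqxx mul1r rmorphM /= conjb.
by rewrite !mulrA (eq_sym t).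
Qed.

Lemma emb_entry (C : numClosedFieldType) n (g : op C 'I_n) x y :
  emb g x y = (x.1 == x.2)%:R * (y.1 == y.2)%:R * g x.1 y.1.
Proof.
rewrite /emb /ocomp (sum_only y.1) => [|u Hu]; last first.
  by rewrite /adjoint /Jmap (eq_sym y.1 u) (negbTE Hu) andbF conjb mulr0.
rewrite (sum_only x.1) => [|v Hv]; last first.
  by rewrite /Jmap (eq_sym x.1 v) (negbTE Hv) andbF mul0r.
rewrite /adjoint /Jmap !eqxx !andbT conjb.
by rewrite -!mulrA (mulrC (g _ _)).
Qed.

Lemma Lnum_entry (C : numClosedFieldType) n (b : 'I_n -> 'I_n -> C) i j rho gam x y :
  Lambda_num b i j rho gam x y =
  \sum_a' \sum_a Fop b i j x.1 (a, x.2) * rho a a' * gam x.2 y.2 * Fop b i j (a', y.2) y.1.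
Proof.
set R := (X in _ = X).
rewrite /Lambda_num /ocomp.
under eq_bigr do rewrite big_distrl.
rewrite sum_pair.
under eq_bigr => p _.
  rewrite (sum_only y.2); last first.
    move=> l Hl; apply: big1 => v _.
    by rewrite /tensor /idop /= (negbTE Hl) mulr0 mulr0.
  over.
rewrite /= sum_pair.
under eq_bigr => a' _.
  rewrite (sum_only y.2); last first.
    move=> k Hk; apply: big1 => v _.
    by rewrite /reassoc /tensor emb_entry /= (negbTE Hk) !(mulr0, mul0r).
  rewrite sum_pair.
  under eq_bigr => q _.
    rewrite (sum_only x.2); last first.
      move=> l Hl.
      by rewrite /tensor /idop /= eq_sym (negbTE Hl) !(mulr0, mul0r).
    over.
  rewrite /= sum_pair.
  under eq_bigr => a _.
    rewrite (sum_only x.2); last first.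
      move=> k Hk.
      by rewrite /reassoc /tensor emb_entry /= (negbTE Hk) !(mulr0, mul0r).
    over.
  over.
rewrite /R; apply: eq_bigr => a' _; apply: eq_bigr => a _.
rewrite /reassoc /tensor emb_entry /idop /= !eqxx !mulr1 !mul1r.
by rewrite !mulrA.
Qed.

Lemma ptr_entry (C : numClosedFieldType) n (b : 'I_n -> 'I_n -> C) i j rho gam k l :
  ptr12 (Lambda_num b i j rho gam) k l =
  (\sum_u xi b i j u * (xi b i j u)^*) *
  ((b i (oplus k j))^* * rho (oplus k j) (oplus l j) * gam k l * b i (oplus l j)).
Proof.
rewrite /ptr12 big_distrl; apply: eq_bigr => u _.
rewrite Lnum_entry /= (sum_only (oplus l j)); last first.
  move=> a' Ha; apply: big1 => a _.
  by rewrite /Fop /ketbra /xi /= (negbTE Ha) !(mulr0, mul0r).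
rewrite (sum_only (oplus k j)); last first.
  move=> a Ha.
  by rewrite /Fop /ketbra /xi /= (negbTE Ha) !(mulr0, mul0r, conjC0).
rewrite /Fop /ketbra /xi /= !eqxx !mulr1.
ring.
Qed.

Lemma xi_norm (C : numClosedFieldType) n (hn : (0 < n)%N) (b : 'I_n -> 'I_n -> C)
  (hbflat : forall i l : 'I_n, `|b i l| ^+ 2 = n%:R^-1) i j :
  \sum_u xi b i j u * (xi b i j u)^* = 1.
Proof.
rewrite sum_pair exchange_big /=.
under eq_bigr => r _.
  rewrite (sum_only (oplus r j)); last first.
    by move=> m Hm; rewrite /xi /= (negbTE Hm) !(mulr0, mul0r).
  rewrite /xi /= eqxx mulr1 -normCK hbflat.
  over.
rewrite sumr_const card_ord -(mulr_natl (n%:R^-1)) mulfV //.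
by rewrite pnatr_eq0 -lt0n.
Qed.

Lemma trace_ptr (C : numClosedFieldType) (T1 T2 T3 : finType) (A : op C ((T1 * T2) * T3)%type) :
  otrace A = otrace (ptr12 A).
Proof. by rewrite /otrace /ptr12 sum_pair exchange_big. Qed.

Theorem mainTheorem15 (C : numClosedFieldType) (n : nat) (hn : (0 < n)%N)
  (b : 'I_n -> 'I_n -> C) (hb : orthonormal_basis b)
  (hbflat : forall i l : 'I_n, `|b i l| ^+ 2 = n%:R^-1)
  (h : 'I_n -> C) (hh : forall l : 'I_n, `|h l| ^+ 2 = n%:R^-1)
  (rho : op C 'I_n) (hrho : is_state rho) (i j : 'I_n) :
  let gam := ketbra h in
  let V := oscale n%:R (ocomp (mulop h) (ocomp (Ushift j) (adjoint (Bop b i)))) in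
  0 < Lambda_den b i j rho gam /\
  Lambda b i j rho gam = ocomp (ocomp V rho) (adjoint V) /\
  unitary V.
Proof.
move=> gam V.
have n0 : (n%:R : C) != 0 by rewrite pnatr_eq0 -lt0n.
have Ve : forall k t, V k t = n%:R * h k * (t == oplus j k)%:R * (b i t)^*.
  by move=> k t; rewrite /V V_entry.
have Pe : forall k l, ptr12 (Lambda_num b i j rho gam) k l =
   (b i (oplus j k))^* * rho (oplus j k) (oplus j l) * (h k * (h l)^*) * b i (oplus j l).
  by move=> k l; rewrite ptr_entry xi_norm // mul1r (oplusC _ k) (oplusC _ l) /gam /ketbra.
have De : Lambda_den b i j rho gam = n%:R^-1 * n%:R^-1.
  rewrite /Lambda_den trace_ptr /otrace.
  under eq_bigr => k _.
    rewrite Pe.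
    have -> : (b i (oplus j k))^* * rho (oplus j k) (oplus j k) * (h k * (h k)^*) *
       b i (oplus j k) = (h k * (h k)^*) * (b i (oplus j k) * (b i (oplus j k))^*) *
       rho (oplus j k) (oplus j k) by ring.
    rewrite -!normCK hh hbflat.
    over.
  rewrite -big_distrr /=.
  have -> : \sum_k rho (oplus j k) (oplus j k) = \sum_t rho t t.
    by rewrite [RHS](reindex_inj (oplus_inj _ j)).
  by case: hrho => _; rewrite /otrace => ->; rewrite mulr1.
split.
  by rewrite De mulr_gt0 // invr_gt0 ltr0n.
split.
  apply: functional_extensionality => k; apply: functional_extensionality => l.
  rewrite /Lambda /oscale -/(Lambda_den b i j rho gam) De Pe /ocomp /adjoint.
  rewrite (sum_only (oplus j l)); last first.
    by move=> t Ht; rewrite Ve (negbTE Ht) !(mulr0, mul0r, conjC0).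
  rewrite (sum_only (oplus j k)); last first.
    by move=> s Hs; rewrite Ve (negbTE Hs) !(mulr0, mul0r, conjC0).
  rewrite !Ve !eqxx !rmorphM /= conjC1 conjC_nat conjCK.
  by field; rewrite n0.
split.
  apply: functional_extensionality => t; apply: functional_extensionality => s.
  rewrite /ocomp /adjoint /idop.
  transitivity (\sum_k (fun u => n%:R * (t == u)%:R * (s == u)%:R * b i t * (b i s)^*) (oplus j k)).
    apply: eq_bigr => k _; rewrite !Ve !rmorphM /= !conjb conjC_nat /=.
    have -> : n%:R * (h k)^* * (t == oplus j k)%:R * (b i t)^*^* * (n%:R * h k * (s == oplus j k)%:R * (b i s)^*)
      = n%:R * n%:R * (h k * (h k)^*) * (t == oplus j k)%:R * (s == oplus j k)%:R * b i t * (b i s)^* by rewrite conjCK; ring.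
    rewrite -normCK hh; field; exact: n0.
  apply: (eq_trans (esym (reindex_inj (P:=xpredT)
     (F:=fun u => n%:R * (t == u)%:R * (s == u)%:R * b i t * (b i s)^*) (oplus_inj _ j)))).
  rewrite (sum_only t); last first.
    by move=> u Hu; rewrite eq_sym (negbTE Hu) !(mulr0, mul0r).
  rewrite eqxx mulr1 (eq_sym s t); case: eqP => [->|_]; last by rewrite !(mulr0, mul0r).
  by rewrite mulr1 -mulrA -normCK hbflat mulfV.
apply: functional_extensionality => k; apply: functional_extensionality => l.
rewrite /ocomp /adjoint /idop (sum_only (oplus j k)); last first.
  by move=> t Ht; rewrite Ve (negbTE Ht) !(mulr0, mul0r).
rewrite !Ve !eqxx !rmorphM /= !conjb conjC_nat conjCK mulr1.
case: (eqVneq k l) => [->|Hkl].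
  rewrite eqxx /= mulr1n mulr1.
  have -> : n%:R * h l * (b i (oplus j l))^* * (n%:R * (h l)^* * b i (oplus j l))
    = n%:R * n%:R * (h l * (h l)^*) * (b i (oplus j l) * (b i (oplus j l))^*) by ring.
  by rewrite -!normCK hh hbflat; field.
have -> : (oplus j k == oplus j l) = false.
  by apply/negbTE; apply: contra Hkl => /eqP /oplus_inj ->.
by rewrite /= !mulr0n !(mulr0, mul0r).
Qed.
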